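(* Let $k\ge 2$ be an integer and let $d_1\ge d_2\ge\cdots\ge d_k\ge 2$ be integers. If $r\ge d_1+k-1$, then for all sufficiently large $n$, $$ex\Big(n,K_r,\bigcup_{i=1}^k S_{d_i}\Big)\le \max_{1\le i\le k}\left\{\frac{d_i-1}{r-i+1}(n-i+1)\right\}.$$
   Context: $S_\ell$ denotes the star $K_{1,\ell}$ with $\ell$ edges, and $\bigcup_{i=1}^k S_{d_i}$ denotes the star forest that is the vertex-disjoint union of $S_{d_1},\dots,S_{d_k}$. For graphs $H$ and $F$, the generalized Turán number $ex(n,H,F)$ is the maximum number of copies of $H$ in an $n$-vertex graph containing no copy of $F$ as a subgraph; $K_r$ is the complete graph on $r$ vertices. *)

(* Defs.v *)
From mathcomp Require Import all_boot all_order all_algebra.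
Set Implicit Arguments. Unset Strict Implicit. Unset Printing Implicit Defensive.
Import Order.TTheory GRing.Theory Num.Theory.

Definition graph (n : nat) := {ffun 'I_n * 'I_n -> bool}.

Definition simple_graph n (G : graph n) : bool :=
  [forall x, ~~ G (x, x)] && [forall x, forall y, G (x, y) == G (y, x)].

Definition contains_copy (T : finType) (F : rel T) n (G : graph n) : bool :=
  [exists f : {ffun T -> 'I_n},
     injectiveb f && [forall x, forall y, F x y ==> G (f x, f y)]].

Definition num_Kr n (G : graph n) (r : nat) : nat :=
  #|[set S : {set 'I_n} | (#|S| == r) &&
       [forall x in S, forall y in S, (x != y) ==> G (x, y)]]|.

Definition ex_Kr (n r : nat) (T : finType) (F : rel T) : nat :=
  \max_(G : graph n | simple_graph G && ~~ contains_copy F G) num_Kr G r.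

(* the star forest S_{d_0} ∪ ... ∪ S_{d_{k-1}}: component i has center
   (i, None) and leaves (i, Some j), j < d i. *)
Definition star_forest_vertex (k : nat) (d : nat -> nat) :=
  {i : 'I_k & option 'I_(d i)}.

Definition star_forest_rel (k : nat) (d : nat -> nat) :
  rel (star_forest_vertex k d) :=
  fun u v => (tag u == tag v) &&
    ((tagged u == None) && (tagged v != None)
     || (tagged u != None) && (tagged v == None)).

(* Main.v *)
Require Import Defs.
From mathcomp Require Import all_boot all_order all_algebra.
From mathcomp Require Import zify.
Import Order.TTheory GRing.Theory Num.Theory.
Set Implicit Arguments. Unset Strict Implicit. Unset Printing Implicit Defensive.
Definition nbr n (G : graph n) (v : 'I_n) : {set 'I_n} := [set u | G (v, u)].
Definition pickn n (A : {set 'I_n}) (m : nat) : {set 'I_n} := [set x in take m (enum A)].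

Lemma pickn_sub n (A : {set 'I_n}) m : pickn A m \subset A.
Proof. by apply/subsetP => x; rewrite inE => /mem_take; rewrite mem_enum. Qed.

Lemma card_pickn n (A : {set 'I_n}) m : #|pickn A m| = minn m #|A|.
Proof.
rewrite cardsE; have/card_uniqP -> : uniq (take m (enum A)) by apply: take_uniq; apply: enum_uniq.
by rewrite size_take_min cardE.
Qed.

Lemma disjP (T : finType) (A B : {set T}) :
  reflect (forall x, x \in A -> x \notin B) [disjoint A & B].
Proof.
rewrite disjoint_subset; apply: (iffP subsetP) => H x /H; by rewrite ?inE.
Qed.

Lemma card_bigcup_le (T I : finType) (P : pred I) (F : I -> {set T}) :
  #|\bigcup_(i | P i) F i| <= \sum_(i | P i) #|F i|.
Proof.
elim/big_rec2: _; first by rewrite cards0.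
move=> i n1 A _ h; rewrite cardsU; apply: leq_trans (leq_subr _ _) _.
by rewrite leq_add2l.
Qed.

Lemma emb n (G : graph n) k (d : nat -> nat) (c : nat -> 'I_n) (Lv : nat -> {set 'I_n}) :
 (forall x y, G (x,y) = G (y,x)) ->
 (forall i, (i < k)%N -> Lv i \subset nbr G (c i)) ->
 (forall i, (i < k)%N -> d i <= #|Lv i|) ->
 (forall i j, (i<k)%N -> (j<k)%N -> c j \notin Lv i) ->
 (forall i j, (i<k)%N -> (j<k)%N -> i != j -> c i != c j) ->
 (forall i j, (i<k)%N -> (j<k)%N -> i != j -> [disjoint Lv i & Lv j]) ->
 contains_copy (@star_forest_rel k d) G.
Proof.
move=> Gsym Hsub Hcard Hcl Hc Hdis.
pose f (u : star_forest_vertex k d) : 'I_n :=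
  match tagged u with None => c (tag u)
  | Some j => nth (c (tag u)) (enum (Lv (tag u))) j end.
have Hin : forall (i : 'I_k) (j : 'I_(d i)), nth (c i) (enum (Lv i)) j \in Lv i.
  move=> i j; rewrite -mem_enum; apply: mem_nth; rewrite -cardE.
  exact: leq_trans (ltn_ord j) (Hcard _ (ltn_ord i)).
apply/existsP; exists [ffun u => f u]; apply/andP; split.
- apply/injectiveP => u v; rewrite !ffunE /f.
  case: u => i [j|]; case: v => i' [j'|] /=.
  + move=> E; have [Eii'|Nii'] := eqVneq i i'.
    { subst i'; move/eqP: E.
      have s1 := leq_trans (ltn_ord j) (Hcard _ (ltn_ord i)).
      have s2 := leq_trans (ltn_ord j') (Hcard _ (ltn_ord i)).
      rewrite cardE in s1 s2.
      rewrite nth_uniq ?enum_uniq //.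
      by move/eqP => E; have -> : j = j' by apply: val_inj. }
    have := Hdis i i' (ltn_ord i) (ltn_ord i') Nii'.
    by move/disjP => /(_ _ (Hin i j)); rewrite E Hin.
  + by move=> E; have := Hcl i i' (ltn_ord i) (ltn_ord i'); rewrite -E Hin.
  + by move=> E; have := Hcl i' i (ltn_ord i') (ltn_ord i); rewrite E Hin.
  + move=> E; have [Eii'|Nii'] := eqVneq i i'; first by subst.
    by have := Hc i i' (ltn_ord i) (ltn_ord i') Nii'; rewrite E eqxx.
- apply/forallP => u; apply/forallP => v; apply/implyP; rewrite /star_forest_rel.
  rewrite !ffunE /f.
  case: u => i [j|]; case: v => i' [j'|]; move=> /andP[/eqP /= Eii' H2]; subst i'.
  + by move: H2 => /eqP.
  + have := subsetP (Hsub _ (ltn_ord i)) _ (Hin i j); rewrite inE Gsym //.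
  + have := subsetP (Hsub _ (ltn_ord i)) _ (Hin i j'); rewrite inE //.
  + by move: H2; rewrite /= ?eqxx //; move/eqP.
Qed.
Fixpoint gU n (G : graph n) (d : nat -> nat) (c : nat -> 'I_n) (X : {set 'I_n}) (i : nat) : {set 'I_n} :=
  match i with 0 => set0
  | i'.+1 => gU G d c X i' :|: pickn (nbr G (c i') :\: (X :|: gU G d c X i')) (d i') end.
Definition gL n (G : graph n) d c X i := pickn (nbr G (c i) :\: (X :|: gU G d c X i)) (d i).

Lemma gL_mem n (G : graph n) d c X i x : x \in gL G d c X i ->
  [/\ x \in nbr G (c i), x \notin X & x \notin gU G d c X i].
Proof. by move/(subsetP (pickn_sub _ _)); rewrite in_setD in_setU negb_or => /andP[/andP[h1 h2] h3]. Qed.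

Lemma gL_sub_gU n (G : graph n) d c X j i : (j < i)%N -> gL G d c X j \subset gU G d c X i.
Proof.
elim: i => // i IH; rewrite ltnS leq_eqVlt => /orP[/eqP ->|/IH h] /=.
  exact: subsetUr.
exact: subset_trans h (subsetUl _ _).
Qed.

Lemma gU_card n (G : graph n) d c X i D : (forall j, (j < i)%N -> d j <= D) ->
  #|gU G d c X i| <= i * D.
Proof.
elim: i => [|i IH] H /=; first by rewrite cards0.
rewrite cardsU; apply: leq_trans (leq_subr _ _) _.
rewrite mulSn addnC; apply: leq_add; last by apply: IH => j hj; apply: H; lia.
rewrite card_pickn; apply: leq_trans (geq_minl _ _) _; exact: H.
Qed.

Lemma mk_copy n (G : graph n) k d b (c : nat -> 'I_n) (Lv : nat -> {set 'I_n}) :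
 (forall x y, G (x,y) = G (y,x)) ->
 (forall j, (j < k)%N -> d j <= d 0) ->
 (b <= k)%N ->
 (forall i j, (i < k)%N -> (j < k)%N -> i != j -> c i != c j) ->
 (forall i, (i < b)%N -> k + k * d 0 + k * d 0 + d 0 <= #|nbr G (c i)|) ->
 (forall i, (b <= i)%N -> (i < k)%N -> Lv i \subset nbr G (c i)) ->
 (forall i, (b <= i)%N -> (i < k)%N -> #|Lv i| = d i) ->
 (forall i j, (b <= i)%N -> (i < k)%N -> (j < k)%N -> c j \notin Lv i) ->
 (forall i j, (b <= i)%N -> (i < k)%N -> (b <= j)%N -> (j < k)%N -> i != j ->
     [disjoint Lv i & Lv j]) ->
 contains_copy (@star_forest_rel k d) G.
Proof.
move=> Gsym Hd Hb Hc Hdeg Hsub Hcard Hcl Hdis.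
set D := d 0.
pose X := [set c (nat_of_ord i) | i : 'I_k] :|: \bigcup_(i < k | (b <= i)%N) Lv i.
have HX : #|X| <= k + k * D.
  rewrite cardsU; apply: leq_trans (leq_subr _ _) _; apply: leq_add.
    by apply: leq_trans (leq_imset_card _ _) _; rewrite card_ord.
  apply: leq_trans (card_bigcup_le _ _) _.
  apply: (@leq_trans (\sum_(i < k | (b <= i)%N) D)).
    by apply: leq_sum => i hi; rewrite Hcard // Hd.
  by rewrite sum_nat_const leq_mul2r (leq_trans (max_card _)) ?card_ord ?orbT.
have cX : forall j, (j < k)%N -> c j \in X.
  by move=> j hj; rewrite inE; apply/orP; left; apply/imsetP; exists (Ordinal hj).
have LX : forall i, (b <= i)%N -> (i < k)%N -> Lv i \subset X.
  move=> i hb hk; apply: subset_trans (subsetUr _ _).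
  exact: (bigcup_sup (Ordinal hk)).
pose Lv' i := if (i < b)%N then gL G d c X i else Lv i.
apply: (emb (Lv := Lv')) => //.
- move=> i hi; rewrite /Lv'; case: ifP => hb; last by apply: Hsub => //; lia.
  by apply/subsetP => x /gL_mem [].
- move=> i hi; rewrite /Lv'; case: ifP => hb; last by rewrite Hcard //; lia.
  rewrite /gL card_pickn.
  rewrite leq_min leqnn /=.
  rewrite cardsD.
  have h1 : #|nbr G (c i) :&: (X :|: gU G d c X i)| <= #|X| + #|gU G d c X i|.
    apply: leq_trans (subset_leq_card (subsetIr _ _)) _.
    by rewrite cardsU leq_subr.
  have h2 : #|gU G d c X i| <= k * D.
    apply: leq_trans (@gU_card _ G d c X i D _) _.
      by move=> j hj; apply: Hd; lia.
    by rewrite leq_mul2r; apply/orP; right; lia.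
  have h3 := Hdeg _ hb. have h4 : d i <= D by apply: Hd; lia.
  rewrite -/D in h3. have h5 := HX. clear -h1 h2 h3 h4 h5. move: h1 h2 h3 h4 h5. set x1 := #|_ :&: _|. set x2 := #|X|. set x3 := #|gU _ _ _ _ _|. set x4 := #|nbr _ _|. lia.
- move=> i j hi hj; rewrite /Lv'; case: ifP => hb; last by apply: Hcl => //; lia.
  by apply/negP => /gL_mem [] _ /negP; rewrite cX.
- exact: Hc.
- move=> i j hi hj hij; rewrite /Lv'.
  have key : forall i j, (i < b)%N -> (j < k)%N -> (i < j)%N -> [disjoint gL G d c X i & Lv' j].
    move=> i0 j0 hi0 hj0 hij0; apply/disjP => x xi; have [_ xX _] := gL_mem xi.
    rewrite /Lv'; case: ifP => hb0.
      apply/negP => /gL_mem [_ _ /negP]; apply.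
      exact: (subsetP (gL_sub_gU G d c X hij0)).
    by apply/negP => /(subsetP (LX _ _ _)) h; move/negP: xX; apply; apply: h; lia.
  case hbi: (i < b)%N; case hbj: (j < b)%N.
  + case: (ltngtP i j) => h; first by have := key i j hbi hj h; rewrite /Lv' hbj.
      by rewrite disjoint_sym; have := key j i hbj hi h; rewrite /Lv' hbi.
    by rewrite h eqxx in hij.
  + have h : (i < j)%N by move/negbT: hbj; rewrite -leqNgt => hbj; apply: leq_trans hbi hbj.
    by have := key i j hbi hj h; rewrite /Lv' hbj.
  + have h : (j < i)%N by move/negbT: hbi; rewrite -leqNgt => hbi; apply: leq_trans hbj hbi.
    by rewrite disjoint_sym; have := key j i hbj hi h; rewrite /Lv' hbi.
  + apply: Hdis => //; lia.
Qed.

Ltac clia := repeat match goal with H : context [@card _ _] |- _ => revert H end;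
  repeat match goal with |- context [@card ?T ?A] => let x := fresh "cd" in set x := @card T A end;
  intros; lia.

Lemma main_graph n (G : graph n) k d r (x0 : 'I_n) :
 (2 <= k)%N ->
 (forall i j, (i <= j)%N -> (j < k)%N -> (d j <= d i)%N) ->
 (forall i, (i < k)%N -> (2 <= d i)%N) ->
 (d 0 + k - 1 <= r)%N ->
 simple_graph G -> ~~ contains_copy (@star_forest_rel k d) G ->
 (num_Kr G r <= k * r * 2 ^ (k + k * d 0 + k * d 0 + d 0))%N \/
 (r - k.-1 = d k.-1 /\ num_Kr G r * d k.-1 <= n - k.-1)%N.
Proof.
move=> hk hmon hd2 hr /andP[/forallP Hirr /forallP Hsym'] Hfree.
set L := k + k * d 0 + k * d 0 + d 0.
have hk1 : k.-1 = (k - 1)%N by rewrite subn1.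
have Gsym : forall x y, G (x,y) = G (y,x).
  by move=> x y; apply/eqP; exact: (forallP (Hsym' x) y).
have Hd : forall j, (j < k)%N -> d j <= d 0 by move=> j hj; apply: hmon.
set B := [set v | L <= #|nbr G v|].
pose cB i := nth x0 (enum B) i.
have cB_in : forall i, (i < #|B|)%N -> cB i \in B.
  by move=> i hi; rewrite -mem_enum; apply: mem_nth; rewrite -cardE.
have cB_inj : forall i j, (i < #|B|)%N -> (j < #|B|)%N -> i != j -> cB i != cB j.
  by move=> i j hi hj; rewrite /cB nth_uniq ?enum_uniq -?cardE.
have cB_deg : forall i, (i < #|B|)%N -> L <= #|nbr G (cB i)|.
  by move=> i /cB_in; rewrite inE.
have hB : (#|B| < k)%N.
  rewrite ltnNge; apply/negP => hkB; move/negP: Hfree; apply.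
  apply: (@mk_copy _ G k d k cB (fun _ => set0)) => //.
  - move=> i j hi hj; apply: cB_inj; lia.
  - move=> i hi; apply: cB_deg; lia.
  - move=> i hi1 hi2; lia.
  - move=> i hi1 hi2; lia.
  - move=> i j hi1 hi2; lia.
  - move=> i j hi1 hi2; lia.
rewrite /num_Kr; set KR := [set S : {set 'I_n} | _].
have KRP : forall Q, Q \in KR -> #|Q| = r /\
    (forall x y, x \in Q -> y \in Q -> x != y -> G (x,y)).
  move=> Q; rewrite inE => /andP[/eqP hQ /forallP hc]; split => // x y hx hy hxy.
  by move: (hc x) => /implyP /(_ hx) /forallP /(_ y) /implyP /(_ hy) /implyP /(_ hxy).
have QB : forall Q, Q \in KR -> r - #|B| <= #|Q :\: B|.
  move=> Q /KRP [hQ _]; rewrite cardsD hQ; apply: leq_sub2l.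
  exact: subset_leq_card (subsetIr _ _).
have inB : forall v, (v \in B) = (L <= #|nbr G v|) by move=> v; rewrite inE.
clearbody cB KR B.
have [hbk | hbk] : #|B| = k.-1 \/ (#|B| < k.-1)%N by lia.
- have small : forall v, v \notin B -> (#|nbr G v :\: B| < d k.-1)%N.
    move=> v vB; rewrite ltnNge; apply/negP => hv; move/negP: Hfree; apply.
    pose c i := if (i < k.-1)%N then cB i else v.
    apply: (@mk_copy _ G k d k.-1 c (fun _ => pickn (nbr G v :\: B) (d k.-1))) => //.
    - lia.
    - move=> i j hi hj hij; rewrite /c; case: ifP => hi'; case: ifP => hj'.
      + apply: cB_inj => //; lia.
      + apply/eqP => E; suff : cB i \in B by rewrite E (negbTE vB).
        apply: cB_in; lia.
      + apply/eqP => E; suff : cB j \in B by rewrite -E (negbTE vB).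
        apply: cB_in; lia.
        move/negbT: hi'; move/negbT: hj'; rewrite -!leqNgt => hj' hi'.
        have E : i = j by lia. by rewrite E eqxx in hij.
    - move=> i hi; rewrite /c hi; apply: cB_deg; lia.
    - move=> i hb hk'; rewrite /c ifN; last by rewrite -leqNgt.
      apply: subset_trans (pickn_sub _ _) _; exact: subsetDl.
    - move=> i hb hk'; have -> : i = k.-1 by lia.
      by rewrite card_pickn; apply/minn_idPl.
    - move=> i j hb hk' hj; rewrite /c; case: ifP => hj'.
        apply/negP => /(subsetP (pickn_sub _ _)); rewrite inE cB_in //; lia.
      apply/negP => /(subsetP (pickn_sub _ _)); rewrite !inE.
      by rewrite (negbTE (Hirr v)) andbF.
    - move=> i j hi hi' hj hj' hij; move: hij; have -> : i = j by lia.
      by rewrite eqxx.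
  have Qform : forall Q u, Q \in KR -> u \in Q -> u \notin B ->
      [/\ r - k.-1 = d k.-1, #|Q :\: B| = d k.-1 & Q = B :|: (u |: (nbr G u :\: B))].
    move=> Q u hQ uQ uB; have [hQr hcl] := KRP Q hQ.
    have s1 : (Q :\: B) :\ u \subset nbr G u :\: B.
      apply/subsetP => x; rewrite !inE => /and3P[xu xB xQ]; rewrite xB /=.
      by apply: hcl => //; rewrite eq_sym.
    have c1 := cardsD1 u (Q :\: B); rewrite in_setD uQ (negbTE uB) /= in c1.
    have c2 := cardsD Q B.
    have c3 : #|Q :&: B| <= #|B| := subset_leq_card (subsetIr _ _).
    have c4 := subset_leq_card s1.
    have c5 := small u uB.
    have c6 : d k.-1 <= d 0 by apply: Hd; lia.
    have EB : Q :&: B = B.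
      apply/eqP; rewrite eqEcard subsetIr /=; clia.
    have EN : (Q :\: B) :\ u = nbr G u :\: B.
      by apply/eqP; rewrite eqEcard s1 /=; clia.
    split; [clia | clia |].
    apply/setP => x; have EB' : (x \in Q :&: B) = (x \in B) by rewrite EB.
    have EN' : (x \in (Q :\: B) :\ u) = (x \in nbr G u :\: B) by rewrite EN.
    rewrite !inE in EB' EN' *.
    case xB: (x \in B) in EB' EN' *; first by rewrite andbT in EB'.
    case: (eqVneq x u) => [->|xu] in EN' *; first by rewrite uQ.
    by rewrite /= in EN' *.
  have exu : forall Q, Q \in KR -> exists2 u, u \in Q & u \notin B.
    move=> Q hQ; have := QB Q hQ; have h2 := hd2 0 (ltnW hk).
    move=> h; have : (0 < #|Q :\: B|)%N by lia.
    by case/card_gt0P => u; rewrite inE => /andP[uB uQ]; exists u.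
  case: (posnP #|KR|) => [->|hpos]; first by left.
  right.
  have [Q0 hQ0] : exists Q, Q \in KR by apply/card_gt0P.
  have [u0 u0Q u0B] := exu Q0 hQ0.
  have [hrk _ _] := Qform Q0 u0 hQ0 u0Q u0B.
  split => //.
  have E1 : #|KR| * d k.-1 = \sum_(Q in KR) #|Q :\: B|.
    rewrite -sum_nat_const; apply: eq_bigr => Q hQ.
    have [u uQ uB] := exu Q hQ.
    by have [_ -> _] := Qform Q u hQ uQ uB.
  have E2 : forall Q : {set 'I_n}, #|Q :\: B| = \sum_(u in ~: B) (u \in Q : nat).
    move=> Q; rewrite -sum1_card.
    rewrite [RHS](eq_bigr (fun u => if u \in Q then 1 else 0)); last by move=> u _; case: (u \in Q).
    rewrite -big_mkcondr; apply: eq_bigl => u; rewrite !inE.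
    done.
  have E3 : forall u, u \notin B -> \sum_(Q in KR) (u \in Q : nat) <= 1.
    move=> u uB.
    rewrite (eq_bigr (fun Q : {set 'I_n} => if u \in Q then 1 else 0)); last by move=> Q _; case: (u \in Q).
    rewrite -big_mkcondr.
    have -> : \sum_(Q | (Q \in KR) && (u \in Q)) 1 = #|[set Q in KR | u \in Q]|.
      by rewrite -sum1_card; apply: eq_bigl => Q; rewrite !inE.
    apply/card_le1_eqP => Q1 Q2; rewrite !inE => /andP[h1 u1] /andP[h2 u2].
    have [_ _ E1'] := Qform Q1 u h1 u1 uB; have [_ _ E2'] := Qform Q2 u h2 u2 uB.
    by rewrite E1' E2'.
  rewrite E1 (eq_bigr _ (fun Q _ => E2 Q)) exchange_big /=.
  apply: (@leq_trans (\sum_(u in ~: B) 1)).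
    by apply: leq_sum => u hu; apply: E3; rewrite inE in hu.
  rewrite sum1_card; have := cardsC B; rewrite card_ord; clia.
- left. rewrite leqNgt; apply/negP => hbig; move/negP: Hfree; apply.
  set b := #|B| in hbk hB cB_in cB_inj cB_deg QB *.
  have pervert : forall u, u \notin B -> #|[set Q in KR | u \in Q]| <= 2 ^ L.
    move=> u uB.
    apply: (@leq_trans #|powerset (u |: nbr G u)|).
      apply: subset_leq_card; apply/subsetP => Q; rewrite inE => /andP[hQ uQ].
      rewrite powersetE; apply/subsetP => x xQ; rewrite !inE.
      case: (eqVneq x u) => //= xu; have [_ hcl] := KRP Q hQ.
      by apply: hcl => //; rewrite eq_sym.
    rewrite card_powerset leq_exp2l // cardsU1.
    have := inB u; rewrite (negbTE uB) => /esym/negbT; rewrite -ltnNge => h.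
    apply: leq_trans (leq_add (leq_b1 _) (leqnn _)) _; clia.
  have greedy : forall m, (m <= k - b)%N -> exists Qf : nat -> {set 'I_n},
      (forall j, (j < m)%N -> Qf j \in KR) /\
      (forall i j, (i < m)%N -> (j < m)%N -> i != j -> [disjoint Qf i :\: B & Qf j :\: B]).
    elim => [|m IH] hm; first by exists (fun _ => set0); split.
    have [Qf [h1 h2]] := IH (ltnW hm).
    pose T := \bigcup_(j < m) (Qf j :\: B).
    have hT : #|T| <= m * r.
      apply: leq_trans (card_bigcup_le _ _) _.
      apply: (@leq_trans (\sum_(j < m) r)); last by rewrite sum_nat_const card_ord.
      apply: leq_sum => j _; have [<- _] := KRP _ (h1 _ (ltn_ord j)).
      exact: subset_leq_card (subsetDl _ _).
    pose bad := \bigcup_(u in T) [set Q in KR | u \in Q].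
    have hbad : #|bad| <= m * r * 2 ^ L.
      apply: leq_trans (card_bigcup_le _ _) _.
      apply: (@leq_trans (\sum_(u in T) 2 ^ L)).
        apply: leq_sum => u uT; apply: pervert.
        by case/bigcupP: uT => j _; rewrite inE => /andP[].
      by rewrite sum_nat_const leq_mul2r hT orbT.
    have hmk : m * r * 2 ^ L <= k * r * 2 ^ L.
      by apply: leq_mul => //; apply: leq_mul => //; lia.
    have : ~~ (KR \subset bad).
      apply/negP => /subset_leq_card h.
      by have := leq_trans h (leq_trans hbad hmk); rewrite leqNgt hbig.
    case/subsetPn => Q hQ hQbad.
    exists (fun j => if j == m then Q else Qf j); split.
      move=> j hj; case: eqP => // /eqP hjm; apply: h1.
      by rewrite ltnS leq_eqVlt (negbTE hjm) in hj.
    move=> i j hi hj hij; cbv beta.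
    have key : forall j, (j < m)%N -> [disjoint Q :\: B & Qf j :\: B].
      move=> j0 hj0; apply/disjP => x xQ; apply/negP => xj.
      move/negP: hQbad; apply; apply/bigcupP; exists x.
        by apply/bigcupP; exists (Ordinal hj0).
      by rewrite inE hQ /=; move: xQ; rewrite inE => /andP[].
    have [Ei|Ni] := eqVneq i m; have [Ej|Nj] := eqVneq j m.
    + by subst; rewrite eqxx in hij.
    + apply: key.
      by rewrite ltnS leq_eqVlt (negbTE Nj) in hj.
    + rewrite disjoint_sym; apply: key.
      by rewrite ltnS leq_eqVlt (negbTE Ni) in hi.
    + apply: h2 => //.
        by rewrite ltnS leq_eqVlt (negbTE Ni) in hi.
      by rewrite ltnS leq_eqVlt (negbTE Nj) in hj.
  have [Qf [hQf1 hQf2]] := greedy (k - b) (leqnn _).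
  pose R i := Qf (i - b) :\: B.
  have Rsz : forall i, (b <= i)%N -> (i < k)%N -> (d 0).+1 <= #|R i|.
    move=> i hb hk'; have hi : (i - b < k - b)%N by lia.
    have := QB _ (hQf1 _ hi); rewrite /R; clia.
  pose c i := if (i < b)%N then cB i else nth x0 (enum (R i)) 0.
  have cR : forall i, (b <= i)%N -> (i < k)%N -> c i \in R i.
    move=> i hb hk'; rewrite /c ltnNge hb /= -mem_enum; apply: mem_nth.
    rewrite -cardE; have := Rsz i hb hk'; clia.
  have cBb : forall i, (i < b)%N -> c i \in B.
    by move=> i hi; rewrite /c hi; apply: cB_in.
  have Rdis : forall i j, (b <= i)%N -> (i < k)%N -> (b <= j)%N -> (j < k)%N -> i != j ->
      [disjoint R i & R j].
    move=> i j hbi hi hbj hj hij.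
    have hne : i - b != j - b by apply/negP => /eqP E; move/negP: hij; apply; apply/eqP; lia.
    apply: hQf2 hne; lia.
  have RnB : forall i x, x \in R i -> x \notin B by move=> i x; rewrite inE => /andP[].
  have RQ : forall i x, x \in R i -> x \in Qf (i - b) by move=> i x; rewrite inE => /andP[].
  apply: (@mk_copy _ G k d b c (fun i => pickn (R i :\ c i) (d i))) => //.
  - lia.
  - move=> i j hi hj hij.
    case hbi: (i < b)%N; case hbj: (j < b)%N.
    + by rewrite /c hbi hbj; apply: cB_inj.
    + apply/eqP => E; have := RnB _ _ (cR j _ _); rewrite -E cBb //.
      by move/negbT: hbj; rewrite -leqNgt => hbj; move/(_ hbj hj).
    + apply/eqP => E; have := RnB _ _ (cR i _ _); rewrite E cBb //.
      by move/negbT: hbi; rewrite -leqNgt => hbi; move/(_ hbi hi).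
    + move/negbT: hbi; move/negbT: hbj; rewrite -!leqNgt => hbj hbi.
      apply/eqP => E; have := Rdis i j hbi hi hbj hj hij.
      by move/disjP => /(_ _ (cR i hbi hi)); rewrite E cR.
  - by move=> i hi; rewrite /c hi; apply: cB_deg.
  - move=> i hb hk'; apply/subsetP => x /(subsetP (pickn_sub _ _)).
    rewrite in_setD1 => /andP[xc xR]; rewrite inE.
    have hi : (i - b < k - b)%N by lia.
    have [_ hcl] := KRP _ (hQf1 _ hi).
    by apply: hcl; [apply: RQ; apply: cR | apply: RQ | rewrite eq_sym].
  - move=> i hb hk'; rewrite card_pickn; apply/minn_idPl.
    have := cardsD1 (c i) (R i); rewrite cR //=.
    have := Rsz i hb hk'; have := Hd i hk'; clia.
  - move=> i j hb hk' hj; apply/negP => /(subsetP (pickn_sub _ _)).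
    rewrite in_setD1 => /andP[cji cjR].
    case hbj: (j < b)%N; first by have := RnB _ _ cjR; rewrite cBb.
    move/negbT: hbj; rewrite -leqNgt => hbj.
    case: (eqVneq i j) => [E|Nij]; first by subst; rewrite eqxx in cji.
    by have := Rdis i j hb hk' hbj hj Nij; move/disjP => /(_ _ cjR); rewrite cR.
  - move=> i j hbi hi hbj hj hij; apply/disjP => x.
    move=> /(subsetP (pickn_sub _ _)) /setD1P [_ xi].
    apply/negP => /(subsetP (pickn_sub _ _)) /setD1P [_ xj].
    by have := Rdis i j hbi hi hbj hj hij; move/disjP => /(_ _ xi); rewrite xj.
Qed.
Unset Implicit Arguments.
Local Open Scope ring_scope.
Lemma le_bigmax_rat k (F : 'I_k -> rat) (i : 'I_k) : F i <= \big[Num.max/0]_(j < k) F j.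
Proof.
elim: k F i => [|k IH] F i; first by case: i.
rewrite big_ord_recl le_max; case: (unliftP ord0 i) => [j ->|->].
  by rewrite IH orbT.
by rewrite lexx.
Qed.

Lemma bigmax_ge0_rat k (F : 'I_k -> rat) : 0 <= \big[Num.max/0]_(j < k) F j.
Proof.
elim: k F => [|k IH] F; first by rewrite big_ord0.
by rewrite big_ord_recl le_max IH orbT.
Qed.

Theorem corollary6p1 (k : nat) (d : nat -> nat) (r : nat) :
  (2 <= k)%N ->
  (forall i j : nat, (i <= j)%N -> (j < k)%N -> (d j <= d i)%N) ->
  (forall i : nat, (i < k)%N -> (2 <= d i)%N) ->
  (d 0%N + k - 1 <= r)%N ->
  exists N : nat, forall n : nat, (N <= n)%N ->
    ((ex_Kr n r (@star_forest_rel k d))%:R : rat) <=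
      \big[Num.max/0]_(i < k)
        (((d i)%:R - 1) / (r%:R - i%:R) * (n%:R - i%:R)).
Proof.
move=> hk hmon hd2 hr.
set L := (k + k * d 0 + k * d 0 + d 0)%N.
exists (k * r * 2 ^ L * r + k)%N => n hn.
have npos : (0 < n)%N by lia.
pose x0 := Ordinal npos.
set Bnd := \big[Num.max/0]_(i < k) _.
rewrite /ex_Kr.
apply: (big_ind (fun x : nat => (x%:R : rat) <= Bnd)).
- by rewrite /Bnd bigmax_ge0_rat.
- by move=> x y hx hy; case: (leqP x y).
move=> G /andP[hs hf].
have hr0 : (0 < r)%N by have := hd2 0%N (ltnW hk); lia.
case: (main_graph x0 hk hmon hd2 hr hs hf) => [h|[h1 h2]].
- have hk0 : (0 < k)%N by lia.
  apply: le_trans _ (le_bigmax_rat _ _ (Ordinal hk0)); rewrite /= subr0 subr0.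
  rewrite mulrAC ler_pdivlMr ?ltr0n //.
  have hd0 : (1 <= d 0)%N by have := hd2 0%N hk0; lia.
  rewrite -(natrB _ hd0) -!natrM ler_nat.
  apply: (@leq_trans (k * r * 2 ^ L * r)%N); first by rewrite leq_mul2r h orbT.
  apply: (@leq_trans n); first by lia.
  apply: leq_pmull; have := hd2 0%N hk0; lia.
- have hk1 : (k.-1 < k)%N by lia.
  apply: le_trans _ (le_bigmax_rat _ _ (Ordinal hk1)); rewrite /=.
  have e1 : (k.-1 <= r)%N by lia.
  have e2 : (k.-1 <= n)%N by lia.
  rewrite -(natrB _ e1) -(natrB _ e2) h1.
  have hdd := hd2 _ hk1.
  rewrite mulrAC ler_pdivlMr ?ltr0n; last by lia.
  have hd0 : (1 <= d k.-1)%N by lia.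
  rewrite -(natrB _ hd0) -!natrM ler_nat.
  apply: leq_trans h2 _; apply: leq_pmull; lia.
Qed.
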